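(* For any distinct $f_0,f_1\in\Delta(\mathcal{G})$ there exists a vertex-transitive graph $G$ such that $f_0(G)\neq f_1(G)$.
   Context: $\mathcal{G}$ is the class of finite simple graphs. $E_n$ is the graph with $n$ vertices and no edges; $\sqcup$ is disjoint union; $\boxtimes$ is the strong product (vertex set $V(G)\times V(H)$, distinct $(g,h),(g',h')$ adjacent iff ($g=g'$ or $gg'\in E(G)$) and ($h=h'$ or $hh'\in E(H)$)). A cohomomorphism $G\to H$ is a map $V(G)\to V(H)$ sending distinct non-adjacent vertices to distinct non-adjacent vertices; $G\le_{\mathcal{G}}H$ if one exists. $\Delta(\mathcal{G})$ is the set of functions $f:\mathcal{G}\to\mathbb{R}_{\ge0}$ with $f(E_n)=n$, $f(G\boxtimes H)=f(G)f(H)$, $f(G\sqcup H)=f(G)+f(H)$, and $f(G)\le f(H)$ whenever $G\le_{\mathcal{G}}H$. *)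

(* Defs.v *)
From HB Require Import structures.
From mathcomp Require Import all_boot all_order all_algebra.
From mathcomp Require Import reals.
Set Implicit Arguments. Unset Strict Implicit. Unset Printing Implicit Defensive.
Import Order.TTheory GRing.Theory Num.Theory.
Local Open Scope ring_scope.

Record graph := Graph {
  gV :> finType;
  gadj : rel gV;
  gadj_sym : symmetric gadj;
  gadj_irr : irreflexive gadj }.

Definition E_graph (n : nat) : graph :=
  @Graph 'I_n (fun _ _ => false) (fun _ _ => erefl) (fun _ => erefl).

Definition dunion_adj (G H : graph) : rel (G + H)%type :=
  fun u v => match u, v with
             | inl a, inl b => gadj a b
             | inr a, inr b => gadj a b
             | _, _ => false end.

Lemma dunion_sym (G H : graph) : symmetric (@dunion_adj G H).
Proof. by case=> a [] b //=; rewrite gadj_sym. Qed.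

Lemma dunion_irr (G H : graph) : irreflexive (@dunion_adj G H).
Proof. by case=> a /=; rewrite gadj_irr. Qed.

Definition dunion (G H : graph) : graph :=
  @Graph (G + H)%type (@dunion_adj G H) (@dunion_sym G H) (@dunion_irr G H).

Definition sprod_adj (G H : graph) : rel (G * H)%type :=
  fun u v => [&& u != v, (u.1 == v.1) || gadj u.1 v.1
                       & (u.2 == v.2) || gadj u.2 v.2].

Lemma sprod_sym (G H : graph) : symmetric (@sprod_adj G H).
Proof.
by move=> u v; rewrite /sprod_adj eq_sym [u.1 == _]eq_sym [u.2 == _]eq_sym
  [gadj u.1 _]gadj_sym [gadj u.2 _]gadj_sym.
Qed.

Lemma sprod_irr (G H : graph) : irreflexive (@sprod_adj G H).
Proof. by move=> u; rewrite /sprod_adj eqxx. Qed.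

Definition sprod (G H : graph) : graph :=
  @Graph (G * H)%type (@sprod_adj G H) (@sprod_sym G H) (@sprod_irr G H).

Definition cohom (G H : graph) (phi : G -> H) : Prop :=
  forall x y : G, x != y -> ~~ gadj x y ->
    (phi x != phi y) && ~~ gadj (phi x) (phi y).

Definition coh_le (G H : graph) : Prop := exists phi : G -> H, cohom phi.

Definition in_Delta (R : realType) (f : graph -> R) : Prop :=
  [/\ forall G, 0 <= f G,
      forall n : nat, f (E_graph n) = n%:R,
      forall G H, f (sprod G H) = f G * f H,
      forall G H, f (dunion G H) = f G + f H
    & forall G H, coh_le G H -> f G <= f H].

Definition is_aut (G : graph) (s : G -> G) : Prop :=
  bijective s /\ forall x y : G, gadj (s x) (s y) = gadj x y.

Definition vertex_transitive (G : graph) : Prop :=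
  forall x y : G, exists s : G -> G, is_aut s /\ s x = y.

(* Main.v *)
Require Import Defs.
From mathcomp Require Import all_boot all_order all_algebra all_fingroup.
From mathcomp Require Import reals.
Set Implicit Arguments. Unset Strict Implicit. Unset Printing Implicit Defensive.
Import Order.TTheory GRing.Theory Num.Theory.

Lemma coh_inj (G H : graph) (phi : G -> H) : injective phi ->
  (forall x y, x != y -> gadj (phi x) (phi y) -> gadj x y) -> cohom phi.
Proof.
move=> inj refl x y nxy nadj; rewrite (inj_eq inj) nxy /=.
by apply/negP => /(refl _ _ nxy); rewrite (negbTE nadj).
Qed.

Definition eqa (G : graph) (a b : G) := (a == b) || gadj a b.

Lemma eqa_sym (G : graph) (a b : G) : eqa a b = eqa b a.
Proof. by rewrite /eqa eq_sym gadj_sym. Qed.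

Lemma eqa_refl (G : graph) (a : G) : eqa a a.
Proof. by rewrite /eqa eqxx. Qed.

Definition pw_adj (H : graph) N : rel (N.-tuple H) :=
  fun u w => (u != w) && [forall i, eqa (tnth u i) (tnth w i)].

Lemma pw_sym H N : symmetric (@pw_adj H N).
Proof.
move=> u w; rewrite /pw_adj eq_sym; congr andb.
by apply/forallP/forallP => h i; rewrite eqa_sym.
Qed.

Lemma pw_irr H N : irreflexive (@pw_adj H N).
Proof. by move=> u; rewrite /pw_adj eqxx. Qed.

Definition pw (H : graph) N : graph := @Graph _ (@pw_adj H N) (@pw_sym H N) (@pw_irr H N).

Lemma forall_cons (H : graph) N (a b : H) (u w : N.-tuple H) :
  [forall i, eqa (tnth [tuple of a :: u] i) (tnth [tuple of b :: w] i)] =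
  eqa a b && [forall i, eqa (tnth u i) (tnth w i)].
Proof.
apply/forallP/andP => [h|[h1 /forallP h2] i].
  split; first by have := h ord0; rewrite !tnth0.
  by apply/forallP => i; have := h (lift ord0 i); rewrite !tnthS.
by case: (unliftP ord0 i) => [j ->|->]; rewrite ?tnthS ?tnth0.
Qed.

Definition pw_to H N (u : pw H N.+1) : sprod H (pw H N) :=
  (thead u, [tuple of behead u]).
Definition pw_of H N (x : sprod H (pw H N)) : pw H N.+1 :=
  [tuple of x.1 :: x.2].

Lemma pw_toK H N : cancel (@pw_to H N) (@pw_of H N).
Proof. by move=> u; rewrite /pw_to /pw_of /= [in RHS](tuple_eta u). Qed.

Lemma pw_ofK H N : cancel (@pw_of H N) (@pw_to H N).
Proof. by case=> a u; rewrite /pw_to /pw_of /= theadE; congr pair; apply: val_inj. Qed.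

Lemma forall_eqa (H : graph) N (u : N.-tuple H) : [forall i, eqa (tnth u i) (tnth u i)].
Proof. by apply/forallP => i; apply: eqa_refl. Qed.

Lemma pw_of_refl H N (x y : sprod H (pw H N)) : x != y ->
  gadj (pw_of x) (pw_of y) -> gadj x y.
Proof.
case: x y => [a u] [b w] nxy /=; rewrite /pw_adj /pw_of /= forall_cons.
case/andP => _ /andP [hab hf]; rewrite /= /sprod_adj nxy /=; move: hab; rewrite /eqa => -> /=.
by rewrite /pw_adj hf andbT; case: (u == w).
Qed.

Lemma pw_to_refl H N (x y : pw H N.+1) : x != y ->
  gadj (pw_to x) (pw_to y) -> gadj x y.
Proof.
have E (c : H) (t : N.-tuple H) : [tuple of behead [tuple of c :: t]] = t.
  by apply: val_inj.
case/tupleP: x => a u; case/tupleP: y => b w nxy.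
rewrite /= /sprod_adj /pw_to /= !theadE !E => /and3P [_ hab htl].
rewrite /pw_adj nxy /= forall_cons; apply/andP; split; first exact: hab.
move: htl; case: eqP => [-> _| _ /andP [_ //]].
exact: forall_eqa.
Qed.

Lemma coh_pw_to H N : cohom (@pw_to H N).
Proof. apply: coh_inj; [exact: can_inj (@pw_toK H N)| exact: pw_to_refl]. Qed.
Lemma coh_pw_of H N : cohom (@pw_of H N).
Proof. apply: coh_inj; [exact: can_inj (@pw_ofK H N)| exact: pw_of_refl]. Qed.

Lemma coh_pw0 H : cohom (fun _ : pw H 0 => (ord0 : E_graph 1)).
Proof. apply: coh_inj => // u w _; by rewrite (tuple0 u) (tuple0 w). Qed.
Lemma coh_pw0' H : cohom (fun _ : E_graph 1 => ([tuple] : pw H 0)).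
Proof.
apply: coh_inj => //.
by move=> x y _; rewrite (ord1 x) (ord1 y).
Qed.

Section Pieces.
Variables (H : graph) (N : nat).

Definition idx := {ffun H -> 'I_N.+1}.
Definition inP (t : idx) (u : N.-tuple H) : bool := [forall v, count_mem v u == t v].
Definition pvert (t : idx) := {u : N.-tuple H | inP t u}.
Definition piece_adj t : rel (pvert t) := fun x y => @pw_adj H N (val x) (val y).
Lemma piece_sym t : symmetric (piece_adj (t:=t)).
Proof. by move=> x y; apply: pw_sym. Qed.
Lemma piece_irr t : irreflexive (piece_adj (t:=t)).
Proof. by move=> x; apply: pw_irr. Qed.
Definition piece t : graph := @Graph (pvert t) _ (@piece_sym t) (@piece_irr t).

Lemma coh_piece t : cohom (fun x : piece t => (val x : pw H N)).
Proof. by apply: coh_inj => // x y; apply: val_inj. Qed.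

Definition permt (p : 'S_N) (u : N.-tuple H) : N.-tuple H := [tuple tnth u (p i) | i < N].

Lemma perm_permt p u : perm_eq (permt p u) u.
Proof. by apply/tuple_permP; exists p. Qed.

Lemma inP_permt t p u : inP t u -> inP t (permt p u).
Proof.
move=> /forallP h; apply/forallP => v.
by rewrite (seq.permP (perm_permt p u)); apply: h.
Qed.

Lemma permtK p : cancel (permt p) (permt (p^-1)%g).
Proof. by move=> u; apply: eq_from_tnth => i; rewrite !tnth_mktuple permKV. Qed.
Lemma permtKV p : cancel (permt (p^-1)%g) (permt p).
Proof. by move=> u; apply: eq_from_tnth => i; rewrite !tnth_mktuple permK. Qed.

Lemma pw_adj_permt p u w : pw_adj (permt p u) (permt p w) = pw_adj u w.
Proof.
rewrite /pw_adj (inj_eq (can_inj (permtK p))); congr andb.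
apply/forallP/forallP => h i.
  by have := h ((p^-1)%g i); rewrite !tnth_mktuple permKV.
by rewrite !tnth_mktuple; apply: h.
Qed.

Definition paut t p (z : piece t) : piece t :=
  exist _ (permt p (val z)) (inP_permt p (valP z)).

Lemma piece_vt t : vertex_transitive (piece t).
Proof.
move=> x y.
have : perm_eq (val y) (val x).
  rewrite /perm_eq; apply/allP => v _.
  have hx := forallP (valP x) v; have hy := forallP (valP y) v.
  by rewrite /= (eqP hx) (eqP hy).
case/tuple_permP => p hp.
exists (paut p); split; last by apply: val_inj; apply: val_inj; rewrite /= hp.
split; first by exists (paut (p^-1)%g) => z; apply: val_inj; rewrite /= ?permtK ?permtKV.
by move=> a b; rewrite /= /piece_adj /= pw_adj_permt.
Qed.

Fixpoint U (l : seq idx) : graph :=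
  match l with
  | [::] => E_graph 1
  | t :: l' => dunion (piece t) (U l')
  end.

Fixpoint gm (l : seq idx) (u : N.-tuple H) : U l :=
  match l return U l with
  | [::] => (ord0 : E_graph 1)
  | t :: l' => match insub u with
               | Some x => inl x
               | None => inr (gm l' u)
               end
  end.

Definition typ (u : N.-tuple H) : idx := [ffun v => inord (count_mem v u)].

Lemma inP_typ u : inP (typ u) u.
Proof.
apply/forallP => v; rewrite ffunE inordK //.
by rewrite ltnS -[X in _ <= X](size_tuple u) count_size.
Qed.

Lemma gm_coh l (u w : pw H N) : typ u \in l -> typ w \in l -> u != w -> ~~ gadj u w ->
  (gm l u != gm l w) && ~~ gadj (gm l u) (gm l w).
Proof.
elim: l => [//|t l IH] /=; rewrite !inE => hu hw nuw nadj.
case: insubP => [x xP xv|xN]; case: insubP => [y yP yv|yN] //=.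
- apply/andP; split.
    by apply: contra nuw => /eqP [] e; rewrite -xv -yv e.
  by rewrite /piece_adj xv yv.
- have hu' : typ u \in l.
    case/orP: hu => // /eqP e; by move: xN; rewrite -e inP_typ.
  have hw' : typ w \in l.
    case/orP: hw => // /eqP e; by move: yN; rewrite -e inP_typ.
  exact: IH.
Qed.

Lemma pw_le_U : coh_le (pw H N) (U (enum {ffun H -> 'I_N.+1})).
Proof.
exists (gm (enum {ffun H -> 'I_N.+1})) => u w nuw nadj.
by apply: gm_coh; rewrite ?mem_enum.
Qed.

End Pieces.
From mathcomp Require Import ring lra zify.
From Stdlib Require Import Lia Classical FunctionalExtensionality.
Local Open Scope ring_scope.

Lemma bern (R : realType) (e : R) (M : nat) : 0 <= e -> 1 + M%:R * e <= (1 + e) ^+ M.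
Proof.
move=> e0; elim: M => [|M IH]; first by rewrite mul0r addr0 expr0.
rewrite exprS -natr1.
have h1 : 0 <= M%:R * e by apply: mulr_ge0.
have h2 : 0 <= (1 + e) ^+ M by apply: exprn_ge0; lra.
nra.
Qed.

Lemma real_key (R : realType) (a b : R) (n : nat) : 1 <= b -> 0 <= a ->
  (forall N, a ^+ N <= ((N.+1) ^ n)%:R * b ^+ N + 1) -> a <= b.
Proof.
move=> b1 a0 h; rewrite leNgt; apply/negP => ba.
have b0 : 0 < b by lra.
pose r := a / b.
have r1 : 1 < r by rewrite /r ltr_pdivlMr // mul1r.
have ar : a = r * b by rewrite /r divfK //; lra.
have key N : r ^+ N <= 2 * (N.+1)%:R ^+ n.
  have bN : 1 <= b ^+ N by apply: exprn_ege1.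
  have P1 : 1 <= (N.+1)%:R ^+ n :> R by apply: exprn_ege1; rewrite ler1n.
  have := h N; rewrite ar exprMn natrX => hN.
  rewrite -(ler_pM2r (lt_le_trans ltr01 bN)); nra.
pose e := r - 1.
have e0 : 0 < e by rewrite /e; lra.
have en : 0 < e ^+ n.+1 by apply: exprn_gt0.
pose M := (Num.Def.archi_bound (2 * (n.+2)%:R ^+ n / e ^+ n.+1)).+1.
have hM : 2 * (n.+2)%:R ^+ n < M%:R * e ^+ n.+1.
  rewrite -ltr_pdivrMr //; apply: lt_le_trans (archi_boundP _) _.
    by apply: divr_ge0; [apply: mulr_ge0; [lra| apply: exprn_ge0; apply: ler0n] | apply: ltW].
  by rewrite ler_nat.
have M1 : 1 <= M%:R :> R by rewrite ler1n.
have := key (M * n.+1)%N; rewrite exprM.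
have rM : M%:R * e <= r ^+ M.
  have := @bern R e M (ltW e0); have -> : 1 + e = r by rewrite /e; ring. 
  lra.
have Me0 : 0 <= M%:R * e by apply: mulr_ge0; lra.
have l1 : (M%:R * e) ^+ n.+1 <= (r ^+ M) ^+ n.+1.
  by apply: lerXn2r; rewrite ?nnegrE //; apply: le_trans rM.
have l2 : (M%:R * e) ^+ n.+1 = M%:R ^+ n * (M%:R * e ^+ n.+1).
  by rewrite exprMn exprS; ring.
have Mn : 0 < M%:R ^+ n :> R by apply: exprn_gt0; lra.
have l3 : M%:R ^+ n * (2 * (n.+2)%:R ^+ n) < M%:R ^+ n * (M%:R * e ^+ n.+1).
  by rewrite ltr_pM2l.
have l4 : (M * n.+1).+1%:R ^+ n <= (M%:R * (n.+2)%:R) ^+ n :> R.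
  apply: lerXn2r; rewrite ?nnegrE //; try by apply: mulr_ge0.
  by rewrite -natrM ler_nat ltn_pmul2l.
have l5 : M%:R ^+ n * (2 * (n.+2)%:R ^+ n) = 2 * (M%:R * (n.+2)%:R) ^+ n :> R.
  by rewrite exprMn; ring.
lra.
Qed.

Section F.
Variables (R : realType) (f : graph -> R) (hf : in_Delta f).
Lemma f_mono G H : coh_le G H -> f G <= f H. Proof. by case: hf => _ _ _ _; apply. Qed.
Lemma f_E n : f (E_graph n) = n%:R. Proof. by case: hf. Qed.
Lemma f_ge0 G : 0 <= f G. Proof. by case: hf. Qed.
Lemma f_sprod G H : f (sprod G H) = f G * f H. Proof. by case: hf. Qed.
Lemma f_dunion G H : f (dunion G H) = f G + f H. Proof. by case: hf. Qed.

Lemma f_pw H N : f (pw H N) = f H ^+ N.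
Proof.
elim: N => [|N IH].
  rewrite expr0 -[1]/(1%:R) -(f_E 1); apply/eqP; rewrite eq_le; apply/andP; split.
    by apply: f_mono; exists (fun _ => ord0); apply: coh_pw0.
  by apply: f_mono; exists (fun _ => [tuple]); apply: coh_pw0'.
have -> : f (pw H N.+1) = f (sprod H (pw H N)).
  apply/eqP; rewrite eq_le; apply/andP; split; apply: f_mono.
    by exists (@pw_to H N); apply: coh_pw_to.
  by exists (@pw_of H N); apply: coh_pw_of.
by rewrite f_sprod IH exprS.
Qed.

Lemma f_U H N l : f (@U H N l) <= (size l)%:R * f (pw H N) + 1.
Proof.
elim: l => [|t l IH] /=; first by rewrite f_E mul0r add0r.
rewrite f_dunion -natr1.
have : f (piece t) <= f (pw H N) by apply: f_mono; exists val; apply: coh_piece.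
lra.
Qed.
End F.

Lemma f_U_agree (R : realType) (f0 f1 : graph -> R) : in_Delta f0 -> in_Delta f1 ->
  (forall G, vertex_transitive G -> f0 G = f1 G) ->
  forall H N l, f0 (@U H N l) = f1 (@U H N l).
Proof.
move=> h0 h1 hvt H N; elim => [|t l IH] /=; first by rewrite !f_E.
by rewrite !f_dunion // IH hvt //; apply: piece_vt.
Qed.

Lemma f_le_vt (R : realType) (f0 f1 : graph -> R) : in_Delta f0 -> in_Delta f1 ->
  (forall G, vertex_transitive G -> f0 G = f1 G) ->
  forall H, 1 <= f1 H -> f0 H <= f1 H.
Proof.
move=> h0 h1 hvt H H1.
apply: (@real_key R _ _ #|H|) => // [|N]; first exact: f_ge0.
rewrite -!f_pw //.
apply: le_trans (f_mono h0 (pw_le_U H N)) _.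
rewrite (f_U_agree h0 h1 hvt).
apply: le_trans (f_U h1 _) _.
by rewrite -cardT card_ffun card_ord.
Qed.

Theorem lemma10 (R : realType) (f0 f1 : graph -> R) :
  in_Delta f0 -> in_Delta f1 -> f0 <> f1 ->
  exists G : graph, vertex_transitive G /\ f0 G <> f1 G.
Proof.
move=> h0 h1 neq.
case: (classic (exists G : graph, vertex_transitive G /\ f0 G <> f1 G)) => // hno.
exfalso; apply: neq.
have hvt : forall G, vertex_transitive G -> f0 G = f1 G.
  by move=> G vt; apply: NNPP => ne; apply: hno; exists G.
apply: functional_extensionality => H0.
pose H := dunion H0 (E_graph 1).
have e0 : f0 H = f0 H0 + 1 by rewrite f_dunion // f_E.
have e1 : f1 H = f1 H0 + 1 by rewrite f_dunion // f_E.
have g0 := f_ge0 h0 H0; have g1 := f_ge0 h1 H0.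
have l1 : f0 H <= f1 H by apply: f_le_vt => //; lra.
have l2 : f1 H <= f0 H.
  have hvt' : forall G, vertex_transitive G -> f1 G = f0 G by move=> G vt; rewrite hvt.
  by apply: (f_le_vt h1 h0 hvt'); lra.
lra.
Qed.
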